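(* For integers $m,n\ge 0$ let $p_m(n)=\prod_{1\le i\le j\le m-1}\frac{2n+i+j}{i+j}$. Then $p_m(0)=1$ and $p_m(1)=C_m$ for all $m\ge 0$, and for all $m\ge 0$, $n\ge 2$, $$p_m(n-1)p_{m+2}(n-1)-p_{m+1}(n-1)^2=p_m(n)\,p_{m+2}(n-2).$$ Moreover, these numbers are uniquely determined by this recursion and these initial values: if $(q_m(n))_{m,n\ge 0}$ is any family of complex numbers with $q_m(0)=1$, $q_m(1)=C_m$ for all $m\ge0$ and $q_m(n-1)q_{m+2}(n-1)-q_{m+1}(n-1)^2=q_m(n)\,q_{m+2}(n-2)$ for all $m\ge 0$, $n\ge 2$, then $q_m(n)=p_m(n)$ for all $m,n\ge 0$.
   Context: $C_m=\frac{1}{m+1}\binom{2m}{m}$ denotes the $m$-th Catalan number. Empty products equal $1$. It is known that $p_m(n)=\det(C_{m+i+j})_{i,j=0}^{n-1}$ for all integers $m,n\ge 0$. *)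

(* Defs.v *)
From HB Require Import structures.
From mathcomp Require Import all_boot all_order all_algebra.
Set Implicit Arguments. Unset Strict Implicit. Unset Printing Implicit Defensive.
Import Order.TTheory GRing.Theory Num.Theory.
Local Open Scope ring_scope.

Definition pmn (F : fieldType) (m n : nat) : F :=
  \prod_(1 <= i < m) \prod_(i <= j < m) ((2 * n + i + j)%N%:R / (i + j)%N%:R).

Definition catalan (F : fieldType) (m : nat) : F :=
  ('C(2 * m, m))%:R / (m.+1)%:R.

(* Main.v *)
Require Import Defs.
From HB Require Import structures.
From mathcomp Require Import all_boot all_order all_algebra.
From mathcomp Require Import ring lra zify.
Import Order.TTheory GRing.Theory Num.Theory.
Local Open Scope ring_scope.


Section Aux.
Variable C : numFieldType.

Definition F (c k : nat) : C := \prod_(1 <= i < k) (c + i)%:R.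

Lemma FS c k : (0 < k)%N -> F c k.+1 = F c k * (c + k)%:R.
Proof. by move=> hk; rewrite /F big_nat_recr. Qed.

Lemma F1 c : F c 1 = 1.
Proof. by rewrite /F big_geq. Qed.

Lemma Fgt0 c k : 0 < F c k.
Proof.
rewrite /F big_nat; apply: prodr_gt0 => i /andP[hi _].
by rewrite ltr0n; lia.
Qed.

Lemma Fneq0 c k : F c k != 0.
Proof. exact: lt0r_neq0 (Fgt0 c k). Qed.

Ltac posnz := rewrite ?Fneq0; try rewrite -[1 : _]/(1%:R : _); rewrite -?natrM -?natrD ?pnatr_eq0 /=; try lia.

Lemma Fshift c k : (0 < k)%N -> F c.+2 k = F c k.+2 / F c 3.
Proof.
move=> hk; apply: (canRL (mulfK (Fneq0 c 3))).
elim: k hk => // k IH _.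
case: k IH => [_|k IH]; first by rewrite F1 mul1r.
rewrite FS // mulrAC IH // [in RHS]FS //.
by rewrite !addSn !addnS.
Qed.

Lemma prod_shift (g : nat -> C) m :
  \prod_(1 <= i < m.+1) g (i + m)%N * \prod_(1 <= i < m.+1) g i
  = \prod_(1 <= i < (2 * m).+1) g i.
Proof.
rewrite [RHS](big_cat_nat _ (n := m.+1)) //=; last by lia.
rewrite mulrC; congr (_ * _).
have -> : (m.+1 = 1 + m)%N by rewrite add1n.
rewrite big_addn.
have -> : ((2 * m).+1 - m = 1 + m)%N by lia.
by [].
Qed.

Lemma prod_shiftF c m :
  \prod_(1 <= i < m.+1) (c + i + m)%:R = F c (2 * m).+1 / F c m.+1 :> C.
Proof.
rewrite /F -(prod_shift (fun i => (c + i)%:R)) mulfK; last exact: (Fneq0 c m.+1).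
by apply: eq_bigr => i _; rewrite addnA.
Qed.


Definition r (m n : nat) : C :=
  F (2 * n) (2 * m).+1 / F (2 * n) m.+1 * (F 0 m.+1 / F 0 (2 * m).+1).

Lemma PR m n : pmn C m.+1 n = pmn C m n * r m n.
Proof.
rewrite /pmn /r.
transitivity (\prod_(1 <= i < m.+1)
   (\prod_(i <= j < m) ((2 * n + i + j)%N%:R / (i + j)%N%:R : C)
     * ((2 * n + i + m)%N%:R / (i + m)%N%:R))).
  by apply: eq_big_nat => i /andP[_ hi]; rewrite big_nat_recr.
rewrite big_split /=; congr (_ * _).
  case: m => [|m]; first by rewrite !big_geq.
  by rewrite big_nat_recr //= [X in _ * X]big_geq // mulr1.
rewrite prodf_div prod_shiftF.
have -> : \prod_(1 <= i < m.+1) (i + m)%:R = \prod_(1 <= i < m.+1) (0 + i + m)%:R :> C.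
  by [].
by rewrite prod_shiftF invf_div.
Qed.


Definition t (m n : nat) : C :=
  F (2 * n) (2 * m).+1 / F (2 * n) m.+2 * (F (2 * n) 2 / F (2 * n) m.+1).

Lemma e2S n : (2 * n.+1 = (2 * n).+2)%N.
Proof. by rewrite mulnS add2n. Qed.

Lemma pmn0 n : pmn C 0 n = 1.
Proof. by rewrite /pmn big_geq. Qed.

Lemma PT m n : pmn C m n.+1 = pmn C m n * t m n.
Proof.
elim: m => [|m IH].
  by rewrite !pmn0 /t muln0 F1 mul1r divr1 mul1r mulVf // Fneq0.
rewrite !PR IH /r /t !e2S !Fshift //.
by field; rewrite !Fneq0.
Qed.


Lemma FS' c k : F c k.+2 = F c k.+1 * (c + k.+1)%:R.
Proof. exact: FS. Qed.

Lemma main_id m n : pmn C m n.+1 * pmn C m.+2 n.+1 - pmn C m.+1 n.+1 ^+ 2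
   = pmn C m n.+2 * pmn C m.+2 n.
Proof.
rewrite !PT !PR /r /t !e2S !Fshift // !FS' !F1.
by field; posnz.
Qed.

Lemma pmn_0 m : pmn C m 0 = 1.
Proof.
elim: m => [|m IH]; first exact: pmn0.
rewrite PR IH /r muln0 mul1r.
by field; posnz.
Qed.

Lemma cat_step m : catalan C m.+1 = catalan C m * r m 1.
Proof.
have b1 := mul_bin_diag (2 * m).+2 m.
have b2 := mul_bin_down (2 * m).+1 m.
have hb : ('C(2 * m.+1, m.+1) * m.+1 * m.+1 = 'C(2 * m, m) * (2 * m).+1 * (2 * m).+2)%N.
  rewrite e2S /=. simpl in b1, b2.
  have e : ((2 * m).+1 - m = m.+1)%N by lia.
  rewrite e in b2. nia.
have hc : ('C(2 * m.+1, m.+1))%:R = ('C(2 * m, m))%:R * ((2 * m).+1)%:R * ((2 * m).+2)%:R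
   / ((m.+1)%:R * (m.+1)%:R) :> C.
  apply: (canRL (mulfK _)); first by rewrite -natrM pnatr_eq0.
  by rewrite mulrA -!natrM hb.
rewrite /catalan hc /r muln1 !Fshift // !FS' !F1.
by field; posnz.
Qed.

Lemma pmn_1 m : pmn C m 1 = catalan C m.
Proof.
elim: m => [|m IH].
  by rewrite pmn0 /catalan muln0 bin0 divr1.
by rewrite PR IH cat_step.
Qed.

Lemma pmn_gt0 m n : 0 < pmn C m n.
Proof.
rewrite /pmn big_nat; apply: prodr_gt0 => i /andP[hi _].
rewrite big_nat; apply: prodr_gt0 => j /andP[hj _].
by apply: divr_gt0; rewrite ltr0n; lia.
Qed.

End Aux.

Theorem lemma2 (C : numClosedFieldType) :
  (forall m : nat, pmn C m 0 = 1 /\ pmn C m 1 = catalan C m) /\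
  (forall m n : nat,
     pmn C m n.+1 * pmn C m.+2 n.+1 - (pmn C m.+1 n.+1) ^+ 2
       = pmn C m n.+2 * pmn C m.+2 n) /\
  (forall q : nat -> nat -> C,
     (forall m : nat, q m 0%N = 1 /\ q m 1%N = catalan C m) ->
     (forall m n : nat,
        q m n.+1 * q m.+2 n.+1 - (q m.+1 n.+1) ^+ 2 = q m n.+2 * q m.+2 n) ->
     forall m n : nat, q m n = pmn C m n).
Proof.
split; first by move=> m; rewrite pmn_0 pmn_1.
split; first exact: main_id.
move=> q h01 hrec.
suff H : forall n m, q m n = pmn C m n /\ q m n.+1 = pmn C m n.+1.
  by move=> m n; case: (H n m).
elim=> [|n IH] m.
  by case: (h01 m) => -> ->; rewrite pmn_0 pmn_1.
split; first by case: (IH m).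
have := hrec m n.
case: (IH m) => _ ->; case: (IH m.+1) => _ ->; case: (IH m.+2) => e1 ->.
rewrite main_id e1 => /mulIf -> //.
exact: lt0r_neq0 (pmn_gt0 _ _ _).
Qed.
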